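(* Let $p\geq 1$ and let $\gamma=(1\,2\,\cdots\,p)\in S_p$ be the full cycle $\gamma(i)=i+1 \pmod p$. For every noncrossing partition $\pi\in NC(p)$, identified with its geodesic permutation (defined in the context), one has $$1+\mathrm{e}(\pi)=\#(\pi\gamma),$$ where $\mathrm{e}(\pi)$ is the number of blocks of $\pi$ of even cardinality and $\#(\sigma)$ denotes the number of cycles of a permutation $\sigma$.
   Context: $NC(p)$ denotes the set of noncrossing partitions of $\{1,\dots,p\}$. A noncrossing partition $\pi$ is identified with the permutation of $\{1,\dots,p\}$ whose cycles are the blocks of $\pi$, each block $\{i_1<i_2<\dots<i_k\}$ being the cycle $i_1\mapsto i_2\mapsto\cdots\mapsto i_k\mapsto i_1$ (these are exactly the permutations $\sigma$ with $|\sigma|+|\sigma^{-1}\gamma|=p-1$, where $|\sigma|$ is the minimal number of transpositions needed to write $\sigma$). For a permutation, $\#$ counts cycles; for a partition, $\#$ counts blocks. *)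

(* Defs.v *)
(* Points {1,...,p} are represented by 'I_p = {0,...,p-1}
   (i <-> i+1). *)
From mathcomp Require Import all_boot all_order all_fingroup.
Set Implicit Arguments. Unset Strict Implicit. Unset Printing Implicit Defensive.

Definition gamma_cycle (p : nat) : {perm 'I_p} := perm (@ordS_inj p).

Definition noncrossing (p : nat) (P : {set {set 'I_p}}) : Prop :=
  forall (B1 B2 : {set 'I_p}) (a b c d : 'I_p),
    B1 \in P -> B2 \in P ->
    (a < b)%N -> (b < c)%N -> (c < d)%N ->
    a \in B1 -> c \in B1 -> b \in B2 -> d \in B2 -> B1 = B2.

Definition is_NC (p : nat) (P : {set {set 'I_p}}) : Prop :=
  partition P [set: 'I_p] /\ noncrossing P.

(* the least element of a set of ordinals (default x0 if empty) *)
Definition set_min (p : nat) (S : {set 'I_p}) (x0 : 'I_p) : 'I_p :=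
  odflt x0 [pick j in S | [forall k in S, (j <= k)%N]].

(* the geodesic permutation of P: each block {i1<...<ik} becomes the cycle
   i1 -> i2 -> ... -> ik -> i1, i.e. i is sent to the next larger element of
   its block, or to the smallest element of its block if i is the largest. *)
Definition nc_next (p : nat) (P : {set {set 'I_p}}) (i : 'I_p) : 'I_p :=
  let B := pblock P i in
  let S := [set j in B | (i < j)%N] in
  if S == set0 then set_min B i else set_min S i.

Definition even_blocks (p : nat) (P : {set {set 'I_p}}) : nat :=
  #|[set B in P | ~~ odd #|B|]|.

Definition ncycles (T : finType) (s : {perm T}) : nat := #|porbits s|.

(* Main.v *)
Require Import Defs.
From mathcomp Require Import all_boot all_order all_fingroup.
From mathcomp Require Import zify.
Set Implicit Arguments. Unset Strict Implicit. Unset Printing Implicit Defensive.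


Definition nxt p (B : {set 'I_p}) (i : 'I_p) : 'I_p :=
  let S := [set j in B | (i < j)%N] in
  if S == set0 then set_min B i else set_min S i.

Lemma nc_nextE p (P : {set {set 'I_p}}) i : nc_next P i = nxt (pblock P i) i.
Proof. by []. Qed.

Lemma set_minP p (S : {set 'I_p}) x0 : S != set0 ->
  set_min S x0 \in S /\ forall k, k \in S -> (set_min S x0 <= k)%N.
Proof.
case/set0Pn => a aS; rewrite /set_min; case: pickP => [j /andP[jS /forall_inP H]|H] /=.
  by split => // k kS; apply: H.
exfalso; case: (arg_minnP (fun j : 'I_p => nat_of_ord j) aS) => j jS jmin.
have jS' : j \in S := jS.
by move: (H j); rewrite jS' /=; move/negbT/negP; apply; apply/forall_inP.
Qed.

Definition nspec p (B : {set 'I_p}) (i v : 'I_p) : Prop :=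
  v \in B /\ (((i < v)%N /\ forall u, u \in B -> (i < u)%N -> (v <= u)%N) \/
   ((forall u, u \in B -> (u <= i)%N) /\ forall u, u \in B -> (v <= u)%N)).

Lemma nxt_spec p (B : {set 'I_p}) i : i \in B -> nspec B i (nxt B i).
Proof.
move=> iB; rewrite /nxt /=; case: ifP => [/eqP S0|/negbT S0].
  have B0 : B != set0 by apply/set0Pn; exists i.
  have [mB mmin] := set_minP i B0.
  split => //; right; split => // u uB; rewrite leqNgt; apply/negP => iu.
  have : u \in [set j in B | (i < j)%N] by rewrite inE uB iu.
  by rewrite S0 inE.
have [mS mmin] := set_minP i S0.
move: mS; rewrite inE => /andP[mB im]; split => //; left; split => // u uB iu.
by apply: mmin; rewrite inE uB.
Qed.

Lemma nspec_uniq p (B : {set 'I_p}) i v w : nspec B i v -> nspec B i w -> v = w.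
Proof.
move=> [vB [[iv vm]|[vm1 vm2]]] [wB [[iw wm]|[wm1 wm2]]]; apply: ord_inj => /=.
- by have := vm _ wB iw; have := wm _ vB iv; lia.
- by have := wm1 _ vB; lia.
- by have := vm1 _ wB; lia.
- by have := vm2 _ wB; have := wm2 _ vB; lia.
Qed.

Lemma nxt_eq p (B : {set 'I_p}) i v : i \in B -> nspec B i v -> nxt B i = v.
Proof. by move=> iB; apply: nspec_uniq; apply: nxt_spec. Qed.

Lemma nxt_in p (B : {set 'I_p}) i : i \in B -> nxt B i \in B.
Proof. by move=> /nxt_spec []. Qed.

Lemma nxt_inj p (B : {set 'I_p}) i j : i \in B -> j \in B -> nxt B i = nxt B j -> i = j.
Proof.
move=> iB jB; have [vB [[iv vm]|[vm1 vm2]]] := nxt_spec iB;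
  have [wB [[jw wm]|[wm1 wm2]]] := nxt_spec jB => E; apply: ord_inj => /=.
- rewrite -E in jw wm; have h1 := vm _ jB; have h2 := wm _ iB.
  case: (ltngtP i j) => // h; [have := h1 h| have := h2 h]; lia.
- rewrite E in iv; have := wm2 _ iB; lia.
- rewrite -E in jw; have := vm2 _ jB; lia.
- by have := vm1 _ jB; have := wm1 _ iB; lia.
Qed.

Lemma nxt_fix p (B : {set 'I_p}) i u : i \in B -> nxt B i = i -> u \in B -> u = i.
Proof.
move=> iB E uB; have [_ [[iv _]|[m1 m2]]] := nxt_spec iB.
  by rewrite E in iv; lia.
rewrite E in m2.
by apply: ord_inj; have := m1 _ uB; have := m2 _ uB; lia.
Qed.

Lemma nxt_del p (B : {set 'I_p}) x z : x \in B -> z \in B -> z != x ->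
  nxt (B :\ x) z = if nxt B z == x then nxt B x else nxt B z.
Proof.
move=> xB zB zx; have zB' : z \in B :\ x by rewrite !inE zx.
apply: nxt_eq => //.
have [vB hv] := nxt_spec zB.
case: eqP => [vx|/eqP vx].
- have [wB hw] := nxt_spec xB.
  have wx : nxt B x != x.
    by apply/eqP => E; move/eqP: zx; apply; apply: (nxt_fix xB E zB).
  split; first by rewrite !inE wx.
  rewrite vx in hv.
  case: hv => [[zlx zm]|[zm1 zm2]]; case: hw => [[xlw xm]|[xm1 xm2]].
  + left; split; first lia.
    move=> u /setD1P[ux uB] zu; apply: xm => //.
    have := zm _ uB zu; suff : nat_of_ord u != nat_of_ord x by lia.
    by [].
  + right; split.
      move=> u /setD1P[ux uB]; rewrite leqNgt; apply/negP => zu.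
      have := zm _ uB zu; have := xm1 _ uB.
      suff : nat_of_ord u != nat_of_ord x by lia. by [].
    by move=> u /setD1P[ux uB]; apply: xm2.
  + right; split.
      by move=> u /setD1P[_ uB]; apply: zm1.
    move=> u /setD1P[ux uB]; apply: xm => //; have := zm2 _ uB.
    suff : nat_of_ord u != nat_of_ord x by lia. by [].
  + exfalso; have := zm1 _ xB; have := zm2 _ zB; have := xm1 _ zB.
    suff : nat_of_ord z != nat_of_ord x by lia. by [].
- split; first by rewrite !inE vx.
  case: hv => [[zv zm]|[zm1 zm2]].
    by left; split => // u /setD1P[_ uB]; apply: zm.
  by right; split => u /setD1P[_ uB]; [apply: zm1|apply: zm2].
Qed.


Lemma tI_eq T (Q : {set {set T}}) A C u : trivIset Q -> A \in Q -> C \in Q ->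
  u \in A -> u \in C -> A = C.
Proof. by move=> tQ AQ CQ uA uC; rewrite -(def_pblock tQ AQ uA) (def_pblock tQ CQ uC). Qed.

Lemma tI_of T (R : {set {set T}}) :
  (forall A C u, A \in R -> C \in R -> u \in A -> u \in C -> A = C) -> trivIset R.
Proof.
move=> H; apply/trivIsetP => A C AR CR neq; rewrite -setI_eq0; apply/eqP/setP => u.
rewrite !inE; apply/negP => /andP[uA uC]; move/eqP: neq; apply; exact: H uA uC.
Qed.

Lemma pblock_out T (Q : {set {set T}}) x : x \notin cover Q -> pblock Q x = set0.
Proof.
move=> xc; rewrite /pblock; case: pickP => [B /andP[BQ xB]|] //=.
by case/negP: xc; apply/bigcupP; exists B.
Qed.

Lemma ncn_out p (Q : {set {set 'I_p}}) z : z \notin cover Q -> nc_next Q z = z.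
Proof.
move=> zc; rewrite nc_nextE pblock_out // /nxt.
have -> : [set j in (set0 : {set 'I_p}) | (z < j)%N] == set0.
  by apply/eqP/setP => u; rewrite !inE.
by rewrite /set_min; case: pickP => [j /andP[]|]; rewrite ?inE.
Qed.

Lemma ncn_in p (Q : {set {set 'I_p}}) B z : trivIset Q -> B \in Q -> z \in B ->
  nc_next Q z = nxt B z.
Proof. by move=> tQ BQ zB; rewrite nc_nextE (def_pblock tQ BQ zB). Qed.

Lemma in_cover T (Q : {set {set T}}) B z : B \in Q -> z \in B -> z \in cover Q.
Proof. by move=> BQ zB; apply/bigcupP; exists B. Qed.

Lemma ncn_blk p (Q : {set {set 'I_p}}) B z : trivIset Q -> B \in Q -> z \in B ->
  nc_next Q z \in B.
Proof. by move=> tQ BQ zB; rewrite (ncn_in tQ BQ zB); apply: nxt_in. Qed.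

Lemma ncn_cov p (Q : {set {set 'I_p}}) z : trivIset Q -> z \in cover Q ->
  nc_next Q z \in cover Q.
Proof.
move=> tQ /bigcupP[B BQ zB]; exact: in_cover BQ (ncn_blk tQ BQ zB).
Qed.

Lemma ncn_inj p (Q : {set {set 'I_p}}) : trivIset Q -> injective (nc_next Q).
Proof.
move=> tQ x y E.
case xc: (x \in cover Q); case yc: (y \in cover Q).
- case/bigcupP: xc => B BQ xB; case/bigcupP: yc => C CQ yC.
  have h1 := ncn_blk tQ BQ xB; have h2 := ncn_blk tQ CQ yC.
  rewrite E in h1; have BC := tI_eq tQ BQ CQ h1 h2; subst C.
  by move: E; rewrite (ncn_in tQ BQ xB) (ncn_in tQ BQ yC); apply: nxt_inj.
- have := ncn_cov tQ xc; rewrite E ncn_out ?yc //.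
- have := ncn_cov tQ yc; rewrite -E ncn_out ?xc //.
- by move: E; rewrite !ncn_out ?xc ?yc.
Qed.

Definition mkperm (T : finType) (f : T -> T) : {perm T} :=
  insubd (1%g : {perm T}) [ffun x => f x].

Lemma mkpermE (T : finType) (f : T -> T) : injective f -> mkperm f =1 f.
Proof.
move=> fi x; have h : injectiveb [ffun x => f x].
  by apply/injectiveP => a b; rewrite !ffunE; apply: fi.
by rewrite /mkperm [@fun_of_perm]unlock insubdK // ffunE.
Qed.

Definition sig p (Q : {set {set 'I_p}}) : {perm 'I_p} :=
  (mkperm (nc_next [set cover Q]) * mkperm (nc_next Q))%g.

Lemma sigE p (Q : {set {set 'I_p}}) z : trivIset Q ->
  sig Q z = nc_next Q (nc_next [set cover Q] z).
Proof.
by move=> tQ; rewrite /sig permM !mkpermE //; apply: ncn_inj => //; apply: trivIset1.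
Qed.

Lemma cyc_in p (S : {set 'I_p}) z : z \in S -> nc_next [set S] z = nxt S z.
Proof. by move=> zS; apply: ncn_in => //; [apply: trivIset1| rewrite inE]. Qed.

Lemma cyc_out p (S : {set 'I_p}) z : z \notin S -> nc_next [set S] z = z.
Proof. by move=> zS; apply: ncn_out; rewrite cover1. Qed.

Definition del p (Q : {set {set 'I_p}}) x : {set {set 'I_p}} :=
  let B := pblock Q x in
  (Q :\ B) :|: (if B :\ x == set0 then set0 else [set B :\ x]).

Lemma delP p (Q : {set {set 'I_p}}) x A :
  A \in del Q x -> (A \in Q /\ A != pblock Q x) \/ (A = pblock Q x :\ x /\ pblock Q x :\ x != set0).
Proof.
rewrite /del !inE; case/orP => [/andP[h1 h2]|]; first by left.
by case: ifP => [_|/negbT h]; rewrite ?inE // => /eqP ->; right.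
Qed.

Lemma del_blk_other p (Q : {set {set 'I_p}}) x A :
  A \in Q -> A != pblock Q x -> A \in del Q x.
Proof. by move=> AQ AB; rewrite /del !inE AQ AB. Qed.

Lemma del_blk_B p (Q : {set {set 'I_p}}) x :
  pblock Q x :\ x != set0 -> pblock Q x :\ x \in del Q x.
Proof. by move=> h; rewrite /del (negbTE h) !inE eqxx orbT. Qed.


Lemma del_triv p (Q : {set {set 'I_p}}) x :
  trivIset Q -> x \in cover Q -> trivIset (del Q x).
Proof.
move=> tQ xc; have BQ := pblock_mem xc.
apply: tI_of => A C u /delP hA /delP hC uA uC.
case: hA => [[AQ AB]|[EA _]]; case: hC => [[CQ CB]|[EC _]]; try subst A; try subst C => //.
- exact: tI_eq tQ AQ CQ uA uC.
- move: uC; rewrite inE => /andP[_ uB].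
  by move/eqP: AB; case; apply: tI_eq tQ AQ BQ uA uB.
- move: uA; rewrite inE => /andP[_ uB].
  by move/eqP: CB; case; apply: tI_eq tQ CQ BQ uC uB.
Qed.

Lemma del_set0 p (Q : {set {set 'I_p}}) x : set0 \notin Q -> set0 \notin del Q x.
Proof.
move=> nQ; apply/negP => /delP [[h _]|[h1 h2]]; first by rewrite h in nQ.
by rewrite -h1 eqxx in h2.
Qed.

Lemma del_cover p (Q : {set {set 'I_p}}) x :
  trivIset Q -> x \in cover Q -> cover (del Q x) = cover Q :\ x.
Proof.
move=> tQ xc; have BQ := pblock_mem xc; have xB : x \in pblock Q x by rewrite mem_pblock.
apply/setP => u; apply/bigcupP/idP.
- case=> A /delP [[AQ AB] uA|[-> _] uA].
    rewrite !inE (in_cover AQ uA) andbT; apply/eqP => ux; subst u.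
    by move/eqP: AB; apply; apply: tI_eq tQ AQ BQ uA xB.
  move: uA; rewrite !inE => /andP[-> uB]; exact: in_cover BQ uB.
- rewrite in_setD1 => /andP[ux /bigcupP[A AQ uA]].
  case AB: (A == pblock Q x); last by exists A => //; apply: del_blk_other; rewrite ?AB.
  move/eqP: AB => AB; subst A.
  have h : u \in pblock Q x :\ x by rewrite in_setD1 ux uA.
  exists (pblock Q x :\ x) => //; apply: del_blk_B; apply/set0Pn; exists u.
  done.
Qed.

Lemma del_ncn p (Q : {set {set 'I_p}}) x z :
  trivIset Q -> x \in cover Q -> z \in cover Q -> z != x ->
  nc_next (del Q x) z = if nc_next Q z == x then nc_next Q x else nc_next Q z.
Proof.
move=> tQ xc zc zx; have BQ := pblock_mem xc; have xB : x \in pblock Q x by rewrite mem_pblock.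
have tD := del_triv tQ xc.
case/bigcupP: zc => C CQ zC.
case CB: (C == pblock Q x).
- move/eqP: CB => CB; subst C.
  have h : z \in pblock Q x :\ x by rewrite in_setD1 zx zC.
  have ne : pblock Q x :\ x != set0 by apply/set0Pn; exists z.
  rewrite (ncn_in tD (del_blk_B ne) h) (ncn_in tQ BQ zC) (ncn_in tQ BQ xB).
  exact: nxt_del.
- have CD := del_blk_other CQ (negbT CB).
  rewrite (ncn_in tD CD zC); have h := ncn_blk tQ CQ zC.
  case: eqP => [E|_]; last by rewrite (ncn_in tQ CQ zC).
  rewrite E in h; by move/negbT: CB; rewrite (tI_eq tQ CQ BQ h xB) eqxx.
Qed.

Lemma del_nc p (Q : {set {set 'I_p}}) x :
  trivIset Q -> x \in cover Q -> noncrossing Q -> noncrossing (del Q x).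
Proof.
move=> tQ xc nQ B1 B2 a b c d /delP h1 /delP h2 ab bc cd aB1 cB1 bB2 dB2.
have BQ := pblock_mem xc.
have sub : forall u, u \in pblock Q x :\ x -> u \in pblock Q x.
  by move=> u; rewrite inE => /andP[].
case: h1 => [[Q1 N1]|[E1 _]]; case: h2 => [[Q2 N2]|[E2 _]].
- exact: nQ ab bc cd aB1 cB1 bB2 dB2.
- rewrite E2 in bB2 dB2.
  by move/eqP: N1; case; apply: nQ ab bc cd aB1 cB1 (sub _ bB2) (sub _ dB2).
- rewrite E1 in aB1 cB1.
  by move/eqP: N2; case; symmetry; apply: nQ ab bc cd (sub _ aB1) (sub _ cB1) bB2 dB2.
- by rewrite E1 E2.
Qed.

Lemma even_blocks_D1 p (Q : {set {set 'I_p}}) B : B \in Q ->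
  even_blocks Q = (~~ odd #|B|) + #|[set C in Q :\ B | ~~ odd #|C|]|.
Proof.
move=> BQ; rewrite /even_blocks (cardsD1 B) inE BQ /=.
congr (_ + _); apply: eq_card => C; rewrite !inE; by case: (C != B).
Qed.

Lemma del_even p (Q : {set {set 'I_p}}) x :
  trivIset Q -> x \in cover Q ->
  even_blocks (del Q x) + ~~ odd #|pblock Q x| =
  even_blocks Q + ((pblock Q x :\ x != set0) && ~~ odd #|pblock Q x :\ x|).
Proof.
move=> tQ xc; have BQ := pblock_mem xc; have xB : x \in pblock Q x by rewrite mem_pblock.
rewrite (even_blocks_D1 BQ).
set B := pblock Q x.
set E := [set C in Q :\ B | ~~ odd #|C|].
suff h : even_blocks (del Q x) = #|E| + ((B :\ x != set0) && ~~ odd #|B :\ x|).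
  by rewrite h [LHS]addnC addnA.
have dE : del Q x = (Q :\ B) :|: (if B :\ x == set0 then set0 else [set B :\ x]) by [].
rewrite /even_blocks dE.
case ne: (B :\ x == set0) => /=.
  rewrite setU0 addn0; apply: eq_card => C; by rewrite !inE.
have nin : B :\ x \notin Q :\ B.
  apply/negP; rewrite in_setD1 => /andP[N BQ'].
  case/set0Pn: (negbT ne) => u uB; have uB' : u \in B by move: uB; rewrite inE => /andP[].
  by move/eqP: N; apply; apply: tI_eq tQ BQ' BQ uB uB'.
rewrite (cardsD1 (B :\ x)) !inE eqxx orbT /= addnC; congr (_ + _).
apply: eq_card => C; rewrite !inE.
case CE: (C == B :\ x) => //=.
  move/eqP: CE => ->; move: nin; rewrite in_setD1.
  by case: (B :\ x != B); case: (B :\ x \in Q).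
by rewrite orbF.
Qed.


Lemma contract (T : finType) (s t : {perm T}) x w : s w = x -> t x = x -> t w = s x ->
  (forall z, z != x -> z != w -> t z = s z) ->
  #|porbits t| = #|porbits s| + (s x != x).
Proof.
move=> swx tx tw tz.
have Et : t = (tperm x w * s)%g.
  apply/permP => z; rewrite permM; case: tpermP => [->|->|/eqP zx /eqP zw] //.
  - by rewrite tx swx.
  - by apply: tz.
have := porbits_mul_tperm s x w; rewrite /= -Et.
have -> : x \in porbit s w by have := mem_porbit s 1 w; rewrite expg1 swx.
rewrite /= addn0 => ->; congr (_ + _).
case: (x =P w) => [xw|/eqP xw]; first by rewrite -{2}swx xw eqxx.
have sxx : s x != x.
  by apply/eqP => sx; move/eqP: xw; apply; apply: (@perm_inj _ s); rewrite sx swx.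
by rewrite sxx.
Qed.

Lemma one_point (T : finType) (g pi s' : {perm T}) x : pi x = x -> s' x = x ->
  (forall z, z != x -> s' z = pi (if g z == x then g x else g z)) ->
  #|porbits s'| = #|porbits (g * pi)%g| + ((g * pi)%g x != x).
Proof.
move=> pix s'x hz; apply: (@contract _ _ _ _ (g^-1 x)%g).
- by rewrite permM permKV.
- done.
- case: (g^-1 x =P x)%g => [E|/eqP ne].
    rewrite E s'x permM; have gx : g x = x by rewrite -{1}E permKV.
    by rewrite gx pix.
  by rewrite hz // permKV eqxx permM.
- move=> z zx zm; rewrite hz // permM; case: eqP => // gz.
  by move/eqP: zm; case; rewrite -gz permK.
Qed.

Lemma dbl (T : eqType) (h : T -> T) x y z : injective h -> h x = y -> z != x -> z != y ->
  let h1 := fun u => if h u == x then h x else h u in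
  (if h1 z == y then h1 y else h1 z) = (if h z == x then h y else h z).
Proof.
move=> hI hx zx zy /=.
case: (h z =P x) => [hz|/eqP hz].
  rewrite hx eqxx; case: (h y =P x) => // hy.
  by move/eqP: zy; case; apply: hI; rewrite hz hy.
case: (h z =P y) => // hzy.
by move/eqP: zx; case; apply: hI; rewrite hzy hx.
Qed.

Lemma two_point (T : finType) (g pi s2 : {perm T}) x y : x != y -> g x = y -> pi x = y ->
  s2 x = x -> s2 y = y ->
  (forall z, z != x -> z != y -> s2 z =
     (let g' := if g z == x then g y else g z in if pi g' == x then pi y else pi g')) ->
  #|porbits s2| = #|porbits (g * pi)%g| + ((g * pi)%g x != x) + ((g * pi)%g y != y).
Proof.
move=> xy gx pix s2x s2y hz.
set s := (g * pi)%g.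
have sE : forall z, s z = pi (g z) by move=> z; rewrite permM.
set xm := (g^-1 x)%g.
have gxm : g xm = x by rewrite permKV.
have gI := @perm_inj _ g; have pI := @perm_inj _ pi.
have xmx : xm != x.
  by apply/eqP => E; move: gxm; rewrite E gx => yx; rewrite yx eqxx in xy.
have gzx : forall z, z != xm -> g z != x.
  by move=> z zm; apply/eqP => E; move/eqP: zm; apply; apply: gI; rewrite E gxm.
case: (pi y =P x) => [piy|/eqP piy].
  have sx : s x = x by rewrite sE gx.
  rewrite sx eqxx addn0.
  apply: (@contract _ s s2 y xm).
  - by rewrite sE gxm.
  - done.
  - have pgy : pi (g y) != x.
      apply/eqP => E; have : g y = y by apply: pI; rewrite E piy.
      by rewrite -{2}gx => /gI yx; rewrite yx eqxx in xy.
    case: (xm =P y) => [E|/eqP ne].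
      have gy : g y = x by rewrite -E gxm.
      by rewrite E s2y sE gy pix.
    by rewrite hz // gxm eqxx /= (negbTE pgy) sE.
  - move=> z zy zm; case: (z =P x) => [->|/eqP zx]; first by rewrite s2x sx.
    rewrite hz // (negbTE (gzx _ zm)) /= sE.
    case: eqP => // E; move/eqP: zx; case; apply: gI; rewrite gx; apply: pI.
    by rewrite E piy.
set w := (pi^-1 x)%g.
have piw : pi w = x by rewrite permKV.
have wy : w != y by apply/eqP => E; rewrite -E piw eqxx in piy.
have wx : w != x.
  by apply/eqP => E; move: piw; rewrite E pix => yx; rewrite yx eqxx in xy.
set wm := (g^-1 w)%g.
have gwm : g wm = w by rewrite permKV.
have pgz : forall z, z != wm -> pi (g z) != x.
  move=> z zw; apply/eqP => E; move/eqP: zw; apply; apply: gI; rewrite gwm.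
  by apply: pI; rewrite E piw.
case: (g y =P w) => [gyw|/eqP gyw]; last first.
  set t := (tperm x wm * s)%g.
  have tE : forall z, t z = s (tperm x wm z) by move=> z; rewrite permM.
  have wmx : wm != x by apply/eqP => E; move: gwm; rewrite E gx => yw; rewrite yw eqxx in wy.
  have wmy : wm != y by apply/eqP => E; move: gwm; rewrite E => gyw'; rewrite gyw' eqxx in gyw.
  have xmwm : xm != wm by apply/eqP => E; move: gwm; rewrite -E gxm => xw; rewrite xw eqxx in wx.
  have h1 : #|porbits t| = #|porbits s| + (s x != x).
    apply: (@contract _ s t x wm).
    - by rewrite sE gwm piw.
    - by rewrite tE tpermL sE gwm piw.
    - by rewrite tE tpermR.
    - by move=> z zx zw; rewrite tE tpermD // eq_sym.
  have ty : t y = s y by rewrite tE tpermD // eq_sym.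
  have h2 : #|porbits s2| = #|porbits t| + (t y != y).
    apply: (@contract _ t s2 y xm).
    - by rewrite tE tpermD 1?eq_sym // sE gxm.
    - done.
    - rewrite ty; case: (xm =P y) => [E|/eqP ne].
        have gy : g y = x by rewrite -E gxm.
      by rewrite E s2y sE gy pix.
      rewrite hz // gxm eqxx /= sE; case: eqP => // E.
      by move/eqP: gyw; case; apply: pI; rewrite E piw.
    - move=> z zy zm; case: (z =P x) => [->|/eqP zx].
        by rewrite s2x tE tpermL sE gwm piw.
      case: (z =P wm) => [->|/eqP zw].
        by rewrite hz // gwm (negbTE wx) /= piw eqxx tE tpermR sE gx.
      by rewrite hz // (negbTE (gzx _ zm)) /= (negbTE (pgz _ zw)) tE tpermD 1?eq_sym // sE.
  by rewrite h2 h1 ty.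
set t := (tperm y xm * s)%g.
have tE : forall z, t z = s (tperm y xm z) by move=> z; rewrite permM.
have xmy : xm != y.
  by apply/eqP => E; move: gxm; rewrite E gyw => wx'; rewrite wx' eqxx in wx.
have h1 : #|porbits t| = #|porbits s| + (s y != y).
  apply: (@contract _ s t y xm).
  - by rewrite sE gxm pix.
  - by rewrite tE tpermL sE gxm pix.
  - by rewrite tE tpermR.
  - by move=> z zy zm; rewrite tE tpermD // eq_sym.
have tx : t x = s x by rewrite tE tpermD // eq_sym.
have h2 : #|porbits s2| = #|porbits t| + (t x != x).
  apply: (@contract _ t s2 x xm).
  - by rewrite tE tpermR sE gyw piw.
  - done.
  - by rewrite tx hz // gxm eqxx /= gyw piw eqxx sE gx.
  - move=> z zx zm; case: (z =P y) => [->|/eqP zy].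
      by rewrite s2y tE tpermL sE gxm pix.
    have zw : z != wm.
      by apply/eqP => E; move/eqP: zy; apply; apply: gI; rewrite E gwm gyw.
    by rewrite hz // (negbTE (gzx _ zm)) /= (negbTE (pgz _ zw)) tE tpermD 1?eq_sym // sE.
by rewrite h2 h1 tx addnAC.
Qed.


Lemma nxt_gt p (B : {set 'I_p}) i u : i \in B -> u \in B -> (i < u)%N -> (i < nxt B i)%N.
Proof.
move=> iB uB iu; have [_ [[h _]|[h _]]] := nxt_spec iB => //.
by have := h _ uB; lia.
Qed.

Lemma nxt_first p (B : {set 'I_p}) i : i \in B -> (i < nxt B i)%N ->
  forall u, u \in B -> (i < u)%N -> (nxt B i <= u)%N.
Proof.
move=> iB lt; have [vB [[_ h]|[h1 h2]]] := nxt_spec iB => //.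
by have := h1 _ vB; lia.
Qed.

Lemma exists_adj p (Q : {set {set 'I_p}}) : trivIset Q -> noncrossing Q ->
  (forall B, B \in Q -> (1 < #|B|)%N) -> cover Q != set0 ->
  exists x, [/\ x \in cover Q, nc_next Q x != x & nc_next [set cover Q] x = nc_next Q x].
Proof.
move=> tQ nQ big ne.
set S := cover Q.
pose gap (x : 'I_p) := #|[set u in S | (x < u < nc_next Q x)%N]|.
suff H : forall n x, x \in S -> (x < nc_next Q x)%N -> (gap x <= n)%N ->
  exists x, [/\ x \in S, nc_next Q x != x & nc_next [set S] x = nc_next Q x].
  case/set0Pn: ne => a aS.
  have BQ := pblock_mem aS; have aB : a \in pblock Q a by rewrite mem_pblock.
  have : (1 < #|pblock Q a|)%N by apply: big.
  rewrite (cardsD1 a) aB add1n ltnS lt0n cards_eq0 => /set0Pn[b]; rewrite in_setD1 => /andP[ba bB].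
  have [m [mB mS ml]] : exists m, [/\ m \in pblock Q a, m \in S & exists u, u \in pblock Q a /\ (m < u)%N].
    case: (ltngtP a b) => h.
    - by exists a; split => //; exists b.
    - by exists b; split => //; [exact: in_cover BQ bB| exists a].
    - by move/eqP: ba; case; apply: ord_inj.
  case: ml => u [uB mu].
  apply: (H (gap m) m) => //.
  by rewrite (ncn_in tQ BQ mB); apply: nxt_gt uB mu.
elim=> [|n IH] x xS lt.
  rewrite leqn0 cards_eq0 => /eqP g0; exists x; split => //.
    by apply/eqP => E; rewrite E ltnn in lt.
  rewrite (cyc_in xS); apply: nxt_eq => //; split; first exact: ncn_cov.
  left; split => // u uS xu; rewrite leqNgt; apply/negP => ult.
  have : u \in [set u in S | (x < u < nc_next Q x)%N] by rewrite inE uS xu ult.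
  by rewrite g0 inE.
move=> gl.
case g0 : (gap x == 0).
  by apply: (IH x) => //; rewrite (eqP g0).
have : [set u in S | (x < u < nc_next Q x)%N] != set0 by rewrite -cards_eq0; apply: negbT g0.
case/set0Pn => u.
rewrite inE => /andP[uS /andP[xu upi]].
set B := pblock Q x; have BQ : B \in Q by apply: pblock_mem.
have xB : x \in B by rewrite mem_pblock.
have piB : nc_next Q x \in B by apply: ncn_blk.
have piE : nc_next Q x = nxt B x by apply: ncn_in.
set C := pblock Q u; have CQ : C \in Q by apply: pblock_mem.
have uC : u \in C by rewrite mem_pblock.
have CB : C != B.
  apply/eqP => E; rewrite E in uC.
  have := nxt_first xB; rewrite -piE => /(_ lt u uC xu); lia.
have inside : forall c, c \in C -> (x < c < nc_next Q x)%N.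
  move=> c cC.
  have cx : nat_of_ord c != nat_of_ord x.
    apply/eqP => /ord_inj E; rewrite E in cC; move/eqP: CB; apply; exact: tI_eq tQ CQ BQ cC xB.
  have cp : nat_of_ord c != nat_of_ord (nc_next Q x).
    apply/eqP => /ord_inj E; rewrite E in cC; move/eqP: CB; apply; exact: tI_eq tQ CQ BQ cC piB.
  case: (ltngtP c x) => [cl|cg|]; last by move/eqP: cx.
  - by move/eqP: CB; case; apply: nQ cl xu upi cC uC xB piB.
  - case: (ltngtP c (nc_next Q x)) => [cl2|cg2|]; last by move/eqP: cp.
      by apply/andP.
    by move/eqP: CB; case; symmetry; apply: nQ xu upi cg2 xB piB uC cC.
have C0 : C != set0 by apply/set0Pn; exists u.
have [mC mmin] := set_minP u C0.
move: (set_min C u) mC mmin => m mC mmin.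
have [c [cC mc]] : exists c, c \in C /\ (m < c)%N.
  have : (1 < #|C|)%N by apply: big.
  rewrite (cardsD1 m) mC add1n ltnS lt0n cards_eq0 => /set0Pn[c]; rewrite in_setD1 => /andP[cm cC].
  exists c; split => //; rewrite ltn_neqAle mmin // andbT.
  by move: cm; apply: contra => /eqP /ord_inj ->.
have mS : m \in S by apply: in_cover CQ mC.
have piC : nc_next Q m = nxt C m by apply: ncn_in.
have ltm : (m < nc_next Q m)%N by rewrite piC; apply: nxt_gt cC mc.
have pmC : nc_next Q m \in C by apply: ncn_blk.
apply: (IH m) => //.
have := inside _ mC; have := inside _ pmC => /andP[h1 h2] /andP[h3 h4].
rewrite -ltnS; apply: leq_trans gl.
rewrite /gap (cardsD1 m [set u in S | (x < u < nc_next Q x)%N]) inE mS h3 h4 /= add1n ltnS.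
apply: subset_leq_card; apply/subsetP => w; rewrite !inE => /andP[wS /andP[mw wp]].
rewrite wS (ltn_trans h3 mw) (ltn_trans wp h2) !andbT.
by apply/eqP => E; rewrite E ltnn in mw.
Qed.


Lemma porbits1 (T : finType) : #|porbits (1 : {perm T})%g| = #|T|.
Proof.
rewrite /porbits card_imset // => a b E.
have : a \in porbit 1 b by rewrite -E porbit_id.
by case/porbitP => i ->; rewrite expg1n perm1.
Qed.

Lemma main_empty p (Q : {set {set 'I_p}}) : trivIset Q -> set0 \notin Q -> cover Q = set0 ->
  #|porbits (sig Q)| + #|cover Q| = p + (cover Q != set0) + even_blocks Q.
Proof.
move=> tQ nQ E.
have s1 : sig Q = 1%g.
  apply/permP => z; rewrite sigE // perm1 cyc_out ?ncn_out // E inE //.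
have e0 : even_blocks Q = 0.
  apply/eqP; rewrite cards_eq0; apply/eqP/setP => B; rewrite !inE.
  case BQ: (B \in Q) => //=; exfalso.
  have : B = set0.
    apply/setP => u; rewrite inE; apply/negbTE/negP => uB.
    by have := in_cover BQ uB; rewrite E inE.
  by move=> B0; move: nQ; rewrite -B0 BQ.
rewrite s1 porbits1 card_ord E cards0 e0.
by rewrite eqxx /= !addn0.
Qed.

Lemma two_cyc_lt p (B : {set 'I_p}) x y : x \in B -> y \in B -> (x < y)%N ->
  nxt B x = y -> nxt B y = x -> forall u, u \in B -> u = x \/ u = y.
Proof.
move=> xB yB xy hx hy u uB.
have [_ [[_ mx]|[m1 _]]] := nxt_spec xB; last by have := m1 _ yB; rewrite leqNgt xy.
have [_ [[h _]|[my1 my2]]] := nxt_spec yB.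
  by rewrite hy ltnNge ltnW in h.
rewrite hx in mx; rewrite hy in my2.
have h1 := my1 _ uB; have h2 := my2 _ uB.
case: (ltngtP x u) => [xu|ux|xu]; last by left; apply: ord_inj.
- by right; apply: ord_inj; apply/eqP; rewrite eqn_leq h1 mx.
- by rewrite ltnNge h2 in ux.
Qed.

Lemma rem2_ne p (B : {set 'I_p}) x y : x \in B -> y \in B -> x != y -> nxt B x = y ->
  ((B :\ x) :\ y != set0) = (nxt B y != x).
Proof.
move=> xB yB xy hx; apply/idP/idP.
  case/set0Pn => u; rewrite !in_setD1 => /and3P[uy ux uB].
  apply/eqP => hy.
  case: (ltngtP x y) => h.
  - by case: (two_cyc_lt xB yB h hx hy uB) => E; [move/eqP: ux|move/eqP: uy].
  - by case: (two_cyc_lt yB xB h hy hx uB) => E; [move/eqP: uy|move/eqP: ux].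
  - by move/eqP: xy; case; apply: ord_inj.
move=> ne; apply/set0Pn; exists (nxt B y); rewrite !in_setD1 ne (nxt_in yB) /= andbT.
apply/eqP => E; have := nxt_fix yB E xB => xy'; by rewrite xy' eqxx in xy.
Qed.


Lemma arith (a s p e e1 e2 m : nat) (b : bool) :
  a + (m != 0) + b + s = p + b + e2 ->
  e1 + ~~ odd m.+2 = e + ~~ odd m.+1 ->
  e2 + ~~ odd m.+1 = e1 + (m != 0) && ~~ odd m ->
  a + s.+2 = p + true + e.
Proof.
case: m => [|m] /=; case: b => /=; rewrite ?negbK; try case: (odd m) => /=; lia.
Qed.

Lemma main p n : forall Q : {set {set 'I_p}}, (#|cover Q| <= n)%N -> trivIset Q ->
  set0 \notin Q -> noncrossing Q ->
  #|porbits (sig Q)| + #|cover Q| = p + (cover Q != set0) + even_blocks Q.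
Proof.
elim: n => [|n IH] Q hn tQ nQ ncQ.
  by apply: main_empty => //; apply/eqP; rewrite -cards_eq0 -leqn0.
have [E|ne] : cover Q = set0 \/ cover Q != set0 by case: eqP; [left|right].
by apply: main_empty.
rewrite ne.
set S := cover Q.
set g := mkperm (nc_next [set S]).
set pi := mkperm (nc_next Q).
have gE : forall z, g z = nc_next [set S] z by apply: mkpermE; apply: ncn_inj; apply: trivIset1.
have piE : forall z, pi z = nc_next Q z by apply: mkpermE; apply: ncn_inj.
have sigQ : sig Q = (g * pi)%g by [].
case: (boolP [exists B in Q, #|B| == 1]) => [/exists_inP [B BQ /cards1P [x Bx]]| /exists_inP noS].
  subst B.
  have xS : x \in S by apply: in_cover BQ (set11 x).
  set Q' := del Q x.
  have tQ' := del_triv tQ xS; have nQ' := del_set0 x nQ; have ncQ' := del_nc tQ xS ncQ.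
  have cQ' : cover Q' = S :\ x by apply: del_cover.
  have pbx : pblock Q x = [set x] by apply: def_pblock => //; rewrite set11.
  have cS : #|S| = (#|S :\ x|).+1 by rewrite (cardsD1 x S) xS.
  have IH' := IH Q'; rewrite cQ' in IH'; have {IH'}IH' := IH' ltac:(by rewrite -ltnS -cS) tQ' nQ' ncQ'.
  have pix : nc_next Q x = x.
    by rewrite (ncn_in tQ BQ (set11 x)); apply/set1P; apply: nxt_in; rewrite set11.
  have op := @one_point _ g pi (sig Q') x.
  have {op}op := op ltac:(by rewrite piE).
  have sx : sig Q' x = x.
    by rewrite sigE // cQ' cyc_out ?ncn_out ?cQ' // !inE eqxx.
  have {op}op := op sx.
  have hz : forall z, z != x -> sig Q' z = pi (if g z == x then g x else g z).
    move=> z zx; rewrite sigE // cQ' !gE !piE.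
    case zS: (z \in S); last first.
      have zS' : z \notin S :\ x by rewrite inE zS andbF.
      have zc : z \notin cover Q' by rewrite cQ'.
      have zS2 : z \notin S by rewrite zS.
      rewrite (cyc_out zS') (ncn_out zc) (cyc_out zS2).
      case: eqP => [E|_]; first by rewrite E eqxx in zx.
      by rewrite ncn_out.
    have zS' : z \in S :\ x by rewrite in_setD1 zS andbT.
    rewrite cyc_in // nxt_del // -!cyc_in //.
    set g' := (if _ == x then _ else _).
    have g'S : g' \in S :\ x.
      by rewrite /g' !cyc_in // -nxt_del //; apply: nxt_in.
    move: g'S; rewrite in_setD1 => /andP[g'x g'S].
    rewrite del_ncn //; case: eqP => // E.
    by move/eqP: g'x; case; apply: (ncn_inj tQ); rewrite E pix.
  have {op}op := op hz.
  have ev := del_even tQ xS; rewrite -/Q' pbx cards1 /= in ev.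
  have e1 : ([set x] :\ x == set0) by apply/eqP/setP => u; rewrite !inE; case: (u == x).
  rewrite e1 /= !addn0 in ev.
  have sxx : ((g * pi)%g x != x) = (S :\ x != set0).
    rewrite permM gE piE.
    case: (S :\ x =P set0) => [E0|/eqP ne0].
      have : nc_next [set S] x = x.
        apply/eqP; apply: contraT => h.
        have : nc_next [set S] x \in S :\ x by rewrite in_setD1 h /= cyc_in // nxt_in.
        by rewrite E0 inE.
      by move=> ->; rewrite pix eqxx.
    case/set0Pn: ne0 => u; rewrite in_setD1 => /andP[ux uS].
    have gx : nc_next [set S] x != x.
      by apply/eqP; rewrite cyc_in // => E; move/eqP: ux; apply; apply: nxt_fix E uS.
    suff -> : (nc_next Q (nc_next [set S] x) != x) by [].
    apply: contra gx => /eqP E.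
    by apply/eqP; apply: (ncn_inj tQ); rewrite E pix.
  rewrite -sigQ in op sxx.
  rewrite sxx in op.
  rewrite cS -ev; move: IH'; rewrite op; case: (S :\ x != set0) => /=.
    by move=> <-; rewrite -addn1 addnA addnAC.
  by rewrite !addn0 => H; rewrite addnS H addn1 addSn.
have big : forall B, B \in Q -> (1 < #|B|)%N.
  move=> B BQ; case: (ltngtP 1 #|B|) => // h.
    have : B = set0 by apply/eqP; rewrite -cards_eq0; move: h; case: #|B|.
    by move=> E; rewrite -E BQ in nQ.
  by case: noS; exists B => //; rewrite -h.
have [x [xS pxx gx]] := exists_adj tQ ncQ big ne.
set y := nc_next Q x in pxx gx.
have yx : x != y by rewrite eq_sym.
have yx' : y != x by [].
set B := pblock Q x.
have BQ : B \in Q := pblock_mem xS.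
have xB : x \in B by rewrite mem_pblock.
have yB : y \in B := ncn_blk tQ BQ xB.
have yS : y \in S := in_cover BQ yB.
set Q1 := del Q x.
have tQ1 := del_triv tQ xS; have nQ1 := del_set0 x nQ; have ncQ1 := del_nc tQ xS ncQ.
have cQ1 : cover Q1 = S :\ x := del_cover tQ xS.
have Sy1 : y \in S :\ x by rewrite in_setD1 yx' yS.
have yS1 : y \in cover Q1 by rewrite cQ1.
set Q2 := del Q1 y.
have tQ2 := del_triv tQ1 yS1; have nQ2 := del_set0 y nQ1; have ncQ2 := del_nc tQ1 yS1 ncQ1.
have cQ2 : cover Q2 = (S :\ x) :\ y by rewrite /Q2 del_cover // cQ1.
have cS : #|S| = (#|(S :\ x) :\ y|).+2.
  by rewrite (cardsD1 x S) xS (cardsD1 y (S :\ x)) Sy1.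
have IH' := IH Q2; rewrite cQ2 in IH'.
have hn2 : (#|(S :\ x) :\ y| <= n)%N by move: hn; rewrite -/S cS ltnS => /ltnW.
have {IH'}IH' := IH' hn2 tQ2 nQ2 ncQ2.
have hx2 : x \notin (S :\ x) :\ y by rewrite !in_setD1 eqxx /= andbF.
have hy2 : y \notin (S :\ x) :\ y by rewrite in_setD1 eqxx.
have tp := @two_point _ g pi (sig Q2) x y yx.
have {tp}tp := tp ltac:(by rewrite gE gx) ltac:(by rewrite piE).
have {tp}tp := tp ltac:(by rewrite sigE // cQ2 cyc_out // ncn_out // cQ2).
have {tp}tp := tp ltac:(by rewrite sigE // cQ2 cyc_out // ncn_out // cQ2).
have hz : forall z, z != x -> z != y -> sig Q2 z =
     (let g' := if g z == x then g y else g z in if pi g' == x then pi y else pi g').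
  move=> z zx zy; rewrite sigE // cQ2 /= !gE !piE.
  case zS: (z \in S); last first.
    have zS2 : z \notin (S :\ x) :\ y by rewrite !in_setD1 zS !andbF.
    have zc : z \notin cover Q2 by rewrite cQ2.
    have zS' : z \notin S by rewrite zS.
    rewrite (cyc_out zS2) (ncn_out zc) (cyc_out zS').
    rewrite [z == x](negbTE zx) ncn_out ?zS' // [z == x](negbTE zx) //.
  have zS1 : z \in S :\ x by rewrite in_setD1 zx zS.
  have zS2 : z \in (S :\ x) :\ y by rewrite in_setD1 zy zS1.
  have Eg : nc_next [set (S :\ x) :\ y] z =
      (if nc_next [set S] z == x then nc_next [set S] y else nc_next [set S] z).
    rewrite cyc_in // (nxt_del Sy1 zS1 zy) (nxt_del xS zS zx) (nxt_del xS yS yx').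
    rewrite -(cyc_in zS) -(cyc_in xS) -(cyc_in yS).
    have D := dbl (ncn_inj (trivIset1 S)) gx zx zy; simpl in D; exact D.
  rewrite Eg.
  set g' := (if nc_next [set S] z == x then nc_next [set S] y else nc_next [set S] z).
  have g'S2 : g' \in (S :\ x) :\ y by rewrite /g' -Eg cyc_in // nxt_in.
  move: g'S2; rewrite !in_setD1 => /andP[g'y /andP[g'x g'S]].
  have g'S1 : g' \in cover Q1 by rewrite cQ1 in_setD1 g'x g'S.
  rewrite (del_ncn tQ1 yS1 g'S1 g'y) (del_ncn tQ xS g'S g'x) (del_ncn tQ xS yS yx').
  have D := dbl (ncn_inj tQ) (erefl y) g'x g'y; simpl in D; exact D.
have {tp}tp := tp hz.
have hsx : ((g * pi)%g x != x) = ((B :\ x) :\ y != set0).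
  have hB : nxt B x = y by rewrite -(ncn_in tQ BQ xB).
  by rewrite permM gE piE gx (rem2_ne xB yB yx hB) -(ncn_in tQ BQ yB).
have hsy : ((g * pi)%g y != y) = ((S :\ x) :\ y != set0).
  have hS : nxt S x = y by rewrite -(cyc_in xS).
  rewrite permM gE piE (rem2_ne xS yS yx hS) -(cyc_in yS).
  by rewrite /y (inj_eq (ncn_inj tQ)).
rewrite -sigQ in hsx hsy tp.
rewrite hsx hsy in tp.
have neB1 : B :\ x != set0 by apply/set0Pn; exists y; rewrite in_setD1 yx' yB.
have ev1 := del_even tQ xS; rewrite -/Q1 -/B neB1 /= in ev1.
have pb1 : pblock Q1 y = B :\ x.
  by apply: def_pblock => //; [apply: del_blk_B| rewrite in_setD1 yx' yB].
have ev2 := del_even tQ1 yS1; rewrite -/Q2 pb1 in ev2.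
have cB : #|B| = (#|(B :\ x) :\ y|).+2.
  by rewrite (cardsD1 x B) xB (cardsD1 y (B :\ x)) in_setD1 yx' yB.
have cB1 : #|B :\ x| = (#|(B :\ x) :\ y|).+1.
  by rewrite (cardsD1 y (B :\ x)) in_setD1 yx' yB.
have hm : ((B :\ x) :\ y != set0) = (#|(B :\ x) :\ y| != 0) by rewrite cards_eq0.
rewrite cB cB1 hm in ev1 ev2; rewrite hm in tp.
rewrite cS.
move: IH' ev1 ev2; rewrite tp.
exact: arith.
Qed.


Lemma nxt_setT p (i : 'I_p) : nxt [set: 'I_p] i = ordS i.
Proof.
apply: nxt_eq; first by rewrite inE.
split; first by rewrite inE.
have hi := ltn_ord i.
case: (ltnP i.+1 p) => h.
  have E : nat_of_ord (ordS i) = i.+1 by rewrite /ordS /= modn_small.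
  left; rewrite E; split => // u _ iu; exact: iu.
have E : nat_of_ord (ordS i) = 0.
  rewrite /ordS /=; have -> : i.+1 = p by apply/eqP; rewrite eqn_leq h hi. by rewrite modnn.
right; rewrite E; split => // u _; have := ltn_ord u; lia.
Qed.

Unset Implicit Arguments.

Theorem lemma1p1 (p : nat) (hp : (0 < p)%N) (P : {set {set 'I_p}}) :
  is_NC P ->
  exists s : {perm 'I_p},
    (forall i, s i = nc_next P i) /\
    (1 + even_blocks P)%N = ncycles (gamma_cycle p * s)%g.
Proof.
case=> hpart hnc.
have tP := partition_trivIset hpart.
have nP : set0 \notin P by rewrite (partition0 hpart).
have cP := cover_partition hpart.
have inj := ncn_inj tP.
exists (mkperm (nc_next P)); split; first exact: mkpermE.
have M := @main p p P ltac:(by rewrite -[X in (_ <= X)%N](card_ord p) max_card) tP nP hnc.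
have sg : sig P = (gamma_cycle p * mkperm (nc_next P))%g.
  rewrite /sig cP; congr (_ * _)%g; apply/permP => i.
  rewrite mkpermE; last by apply: ncn_inj; apply: trivIset1.
  by rewrite cyc_in ?inE // nxt_setT /gamma_cycle permE.
have ne : [set: 'I_p] != set0 by apply/set0Pn; exists (Ordinal hp); rewrite inE.
rewrite sg cP cardsT card_ord ne in M.
rewrite /ncycles; lia.
Qed.
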